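(* Let $\mathbf{u},\mathbf{v}\in\mathbb{R}^2$ be fixed linearly independent unit vectors, and let $D_1\subset\mathbb{R}^2$ be an open disc of radius $r_1$ centered at the origin. Let $\mathbf{f}=(f_1,f_2)$ be a vector field on $\mathbb{R}^2$ with $f_1,f_2\in C^2_c(D_1)$. Then the longitudinal V-line transform satisfies $\mathcal{L}\mathbf{f}\equiv 0$ on $\mathbb{R}^2$ if and only if $\mathbf{f}=\nabla V$ for some scalar function $V$.
   Context: For a function $h$ on $\mathbb{R}^2$ and a unit vector $\mathbf{u}$, the divergent beam transform is $\mathcal{X}_{\mathbf{u}}h(\mathbf{x})=\int_0^\infty h(\mathbf{x}+t\mathbf{u})\,dt$. The longitudinal V-line transform of $\mathbf{f}$ (with respect to the fixed directions $\mathbf{u},\mathbf{v}$) is the function on $\mathbb{R}^2$ given by $\mathcal{L}\mathbf{f}=-\mathcal{X}_{\mathbf{u}}(\mathbf{f}\cdot\mathbf{u})+\mathcal{X}_{\mathbf{v}}(\mathbf{f}\cdot\mathbf{v})$, where $\cdot$ is the Euclidean dot product. *)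

(* Defs.v *)
From Stdlib Require Import Reals.
From Coquelicot Require Import Coquelicot.
Open Scope R_scope.

(* Scalar functions on R^2 are curried: g : R -> R -> R, g x y = g(x,y). *)

Definition partial1 (g : R -> R -> R) (x y : R) : R := Derive (fun t => g t y) x.
Definition partial2 (g : R -> R -> R) (x y : R) : R := Derive (fun t => g x t) y.

Definition continuous2 (g : R -> R -> R) : Prop :=
  forall x y : R, continuous (fun p : R * R => g (fst p) (snd p)) (x, y).

Definition C1_2d (g : R -> R -> R) : Prop :=
  continuous2 g /\
  (forall x y, ex_derive (fun t => g t y) x /\ ex_derive (fun t => g x t) y) /\
  continuous2 (partial1 g) /\ continuous2 (partial2 g).

Definition C2_2d (g : R -> R -> R) : Prop :=
  C1_2d g /\ C1_2d (partial1 g) /\ C1_2d (partial2 g).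

(* Support (closure of {g <> 0}) is a compact subset of the open disc of
   radius r1 centred at 0; equivalently g vanishes outside some closed disc
   of radius r < r1. *)
Definition supp_in_disc (g : R -> R -> R) (r1 : R) : Prop :=
  exists r, 0 <= r < r1 /\ forall x y, r ^ 2 <= x ^ 2 + y ^ 2 -> g x y = 0.

Definition beam (h : R -> R -> R) (u1 u2 : R) (x y : R) : R :=
  RInt_gen (fun t => h (x + t * u1) (y + t * u2)) (at_point 0) (Rbar_locally p_infty).

Definition LVT (f1 f2 : R -> R -> R) (u1 u2 v1 v2 : R) (x y : R) : R :=
  - beam (fun a b => f1 a b * u1 + f2 a b * u2) u1 u2 x y
  + beam (fun a b => f1 a b * v1 + f2 a b * v2) v1 v2 x y.

(* Main.v *)
Require Import Defs.
From Stdlib Require Import Reals Lra Psatz.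
From Coquelicot Require Import Coquelicot.
Open Scope R_scope.

Lemma cont2_comb (f1 f2 : R -> R -> R) (c1 c2 : R) :
  continuous2 f1 -> continuous2 f2 -> continuous2 (fun a b => f1 a b * c1 + f2 a b * c2).
Proof.
  intros H1 H2 x y.
  apply (continuous_plus (fun p : R * R => f1 (fst p) (snd p) * c1)
                         (fun p : R * R => f2 (fst p) (snd p) * c2)).
  - apply (continuous_mult (fun p : R * R => f1 (fst p) (snd p)) (fun _ => c1)).
    apply H1. apply continuous_const.
  - apply (continuous_mult (fun p : R * R => f2 (fst p) (snd p)) (fun _ => c2)).
    apply H2. apply continuous_const.
Qed.

Lemma cont_line (k : R -> R -> R) x y u1 u2 t :
  continuous2 k -> continuous (fun s => k (x + s * u1) (y + s * u2)) t.
Proof.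
  intros Hk.
  refine (@continuous_comp_2 R_UniformSpace R_UniformSpace R_UniformSpace R_UniformSpace
     (fun s => x + s * u1) (fun s => y + s * u2) k t _ _ _).
  - apply (ex_derive_continuous (fun s => x + s * u1)). auto_derive. easy.
  - apply (ex_derive_continuous (fun s => y + s * u2)). auto_derive. easy.
  - apply Hk.
Qed.

Lemma line_far (k : R -> R -> R) r x y u1 u2 t :
  0 <= r -> u1 ^ 2 + u2 ^ 2 = 1 ->
  (forall a b, r ^ 2 <= a ^ 2 + b ^ 2 -> k a b = 0) ->
  2 * (Rabs x + Rabs y) + r <= t -> k (x + t * u1) (y + t * u2) = 0.
Proof.
  intros Hr Hu Hk Ht. apply Hk.
  assert (Hu1 : Rabs u1 <= 1).
  { pose proof (pow2_abs u1). pose proof (Rabs_pos u1). nra. }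
  assert (Hx : - Rabs x <= x * u1).
  { destruct (Rle_dec 0 x).
    - rewrite Rabs_right by lra. assert (-1 <= u1 <= 1) by nra. nra.
    - rewrite Rabs_left by lra. assert (-1 <= u1 <= 1) by nra. nra. }
  assert (Hy : - Rabs y <= y * u2).
  { destruct (Rle_dec 0 y).
    - rewrite Rabs_right by lra. assert (-1 <= u2 <= 1) by nra. nra.
    - rewrite Rabs_left by lra. assert (-1 <= u2 <= 1) by nra. nra. }
  pose proof (Rabs_pos x). pose proof (Rabs_pos y).
  assert (Ht0 : 0 <= t) by lra.
  assert (Hex : (x + t*u1)^2 + (y+t*u2)^2 = x^2 + y^2 + 2*t*(x*u1+y*u2) + t^2*(u1^2+u2^2)) by ring.
  rewrite Hex, Hu.
  assert (t * (x*u1 + y*u2) >= - t * (Rabs x + Rabs y)) by nra.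
  assert (t * (t - 2 * (Rabs x + Rabs y)) >= r * r) by nra.
  nra.
Qed.

Lemma RInt_zero_tail (g : R -> R) T a b :
  (forall t, T <= t -> g t = 0) -> T <= a -> T <= b -> RInt g a b = 0.
Proof.
  intros Hg Ha Hb.
  rewrite (RInt_ext g (fun _ => 0)).
  - rewrite RInt_const. apply (@scal_zero_r R_AbsRing R_NormedModule).
  - intros t [H1 H2]. apply Hg.
    unfold Rmin in H1. destruct (Rle_dec a b); lra.
Qed.

Lemma exRI (g : R -> R) a b : (forall t, continuous g t) -> ex_RInt g a b.
Proof. intros Hg. apply (@ex_RInt_continuous R_CompleteNormedModule). intros; apply Hg. Qed.

Lemma gen_trunc (g : R -> R) T :
  (forall t, continuous g t) -> 0 <= T -> (forall t, T <= t -> g t = 0) ->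
  RInt_gen g (at_point 0) (Rbar_locally p_infty) = RInt g 0 T.
Proof.
  intros Hc HT Hg.
  apply is_RInt_gen_unique.
  refine (proj2 (filterlimi_locally _ _) _).
  intros eps.
  apply (Filter_prod _ _ _ (fun a => a = 0) (fun b => T < b)).
  - reflexivity.
  - exists T. intros; lra.
  - intros a b -> Hb. exists (RInt g 0 b). split.
    + apply (@RInt_correct R_CompleteNormedModule), exRI, Hc.
    + simpl.
      rewrite <- (RInt_Chasles g 0 T b) by (apply exRI, Hc).
      rewrite (RInt_zero_tail g T T b) by (auto; lra).
      change (ball (RInt g 0 T) eps (RInt g 0 T + 0)). rewrite Rplus_0_r. apply ball_center.
Qed.

Section Beam.
Variables (k : R -> R -> R) (r u1 u2 : R).
Hypothesis Hk : continuous2 k.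
Hypothesis Hr : 0 <= r.
Hypothesis Hu : u1 ^ 2 + u2 ^ 2 = 1.
Hypothesis Hsupp : forall a b, r ^ 2 <= a ^ 2 + b ^ 2 -> k a b = 0.

Lemma beam_val x y T :
  2 * (Rabs x + Rabs y) + r <= T ->
  beam k u1 u2 x y = RInt (fun t => k (x + t * u1) (y + t * u2)) 0 T.
Proof.
  intros HT. unfold beam. apply gen_trunc.
  - intros; apply cont_line; auto.
  - pose proof (Rabs_pos x); pose proof (Rabs_pos y); lra.
  - intros t Ht. apply line_far with r; auto; lra.
Qed.

Lemma beam_shift x y a :
  beam k u1 u2 x y - beam k u1 u2 (x + a * u1) (y + a * u2)
  = RInt (fun t => k (x + t * u1) (y + t * u2)) 0 a.
Proof.
  set (g := fun t => k (x + t * u1) (y + t * u2)).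
  assert (Hg : forall t, continuous g t) by (intros; apply cont_line; auto).
  assert (Hu1 : Rabs u1 <= 1).
  { pose proof (pow2_abs u1). pose proof (Rabs_pos u1). pose proof (pow2_ge_0 u2). nra. }
  assert (Hu2 : Rabs u2 <= 1).
  { pose proof (pow2_abs u2). pose proof (Rabs_pos u2). pose proof (pow2_ge_0 u1). nra. }
  pose proof (Rabs_pos x); pose proof (Rabs_pos y); pose proof (Rabs_pos a).
  set (T := 2 * (Rabs x + Rabs y) + r + 5 * Rabs a).
  rewrite (beam_val x y T) by (unfold T; lra).
  rewrite (beam_val (x + a * u1) (y + a * u2) T).
  2:{ unfold T.
      pose proof (Rabs_triang x (a * u1)). pose proof (Rabs_triang y (a * u2)).
      rewrite Rabs_mult in *.
      assert (Rabs a * Rabs u1 <= Rabs a) by nra.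
      assert (Rabs a * Rabs u2 <= Rabs a) by nra. lra. }
  assert (E : RInt g (1*0+a) (1*T+a) = RInt (fun t => k (x+a*u1+t*u1) (y+a*u2+t*u2)) 0 T).
  { rewrite <- RInt_comp_lin by (apply exRI, Hg). apply RInt_ext. intros t _.
    unfold g, scal; simpl; unfold mult; simpl. rewrite Rmult_1_l. f_equal; ring. }
  rewrite <- E. replace (1*0+a) with a by ring. replace (1*T+a) with (T+a) by ring.
  fold g.
  assert (Ta : a <= T) by (unfold T; pose proof (Rle_abs a); lra).
  rewrite <- (RInt_Chasles g 0 a T) by (apply exRI, Hg).
  rewrite <- (RInt_Chasles g a T (T + a)) by (apply exRI, Hg).
  assert (Hz : forall t, 2 * (Rabs x + Rabs y) + r <= t -> g t = 0).
  { intros t Ht. apply line_far with r; auto. }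
  rewrite (RInt_zero_tail g (2 * (Rabs x + Rabs y) + r) T (T + a)).
  2: exact Hz.
  2: unfold T; lra.
  2: unfold T; pose proof (Rle_abs (-a)); rewrite Rabs_Ropp in *; lra.
  change (RInt g 0 a + RInt g a T - (RInt g a T + 0) = RInt g 0 a). ring.
Qed.
End Beam.

Lemma seg_avg (k : R -> R -> R) x y c w1 w2 :
  continuous2 k -> Rabs w1 <= 1 -> Rabs w2 <= 1 ->
  forall eps, 0 < eps -> exists delta, 0 < delta /\
  forall a b h, Rabs (a - x) < delta -> Rabs (b - y) < delta -> Rabs h < delta ->
  Rabs (RInt (fun s => k (a + s * w1) (b + s * w2)) 0 (h * c) - h * c * k x y)
    <= Rabs (h * c) * eps.
Proof.
  intros Hk Hw1 Hw2 eps Heps.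
  assert (Hc2 : continuity_2d_pt k x y).
  { apply continuity_2d_pt_filterlim. apply Hk. }
  destruct (Hc2 (mkposreal eps Heps)) as [d0 Hd0].
  pose proof (Rabs_pos c).
  exists (d0 / (1 + Rabs c)). split.
  { apply Rdiv_lt_0_compat. apply cond_pos. lra. }
  intros a b h Ha Hb Hh.
  assert (Hd : d0 / (1 + Rabs c) * (1 + Rabs c) = d0) by (field; lra).
  set (g := fun s => k (a + s * w1) (b + s * w2)).
  assert (Hg : forall t, continuous g t) by (intros; apply cont_line; auto).
  assert (HI : is_RInt (fun s => minus (g s) (k x y)) 0 (h * c)
                 (minus (RInt g 0 (h * c)) (scal (h * c - 0) (k x y)))).
  { apply (@is_RInt_minus R_NormedModule g (fun _ => k x y)).
    apply (@RInt_correct R_CompleteNormedModule), exRI, Hg.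
    apply (@is_RInt_const R_NormedModule). }
  assert (Hb0 : forall s, Rmin 0 (h * c) <= s <= Rmax 0 (h * c) ->
            norm (minus (g s) (k x y)) <= eps).
  { intros s Hs.
      unfold norm, minus, plus, opp; simpl. unfold abs; simpl.
      assert (Hsh : Rabs s <= Rabs (h * c)).
      { unfold Rmin, Rmax in Hs. destruct (Rle_dec 0 (h * c)).
        - rewrite !Rabs_right by lra. lra.
        - rewrite !Rabs_left1 by lra. lra. }
      rewrite Rabs_mult in Hsh.
      assert (Rabs h * Rabs c <= d0 / (1 + Rabs c) * Rabs c)
        by (apply Rmult_le_compat_r; lra).
      left. apply Hd0.
      - replace (a + s * w1 - x) with ((a - x) + s * w1) by ring.
        eapply Rle_lt_trans. apply Rabs_triang. rewrite Rabs_mult.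
        assert (Rabs s * Rabs w1 <= Rabs s) by (pose proof (Rabs_pos s); nra).
        nra.
      - replace (b + s * w2 - y) with ((b - y) + s * w2) by ring.
        eapply Rle_lt_trans. apply Rabs_triang. rewrite Rabs_mult.
        assert (Rabs s * Rabs w2 <= Rabs s) by (pose proof (Rabs_pos s); nra).
        nra. }
  pose proof (norm_RInt_le_const_abs _ _ _ _ eps Hb0 HI) as Hn.
  revert Hn. unfold norm, minus, plus, opp, scal; simpl. unfold abs, mult; simpl.
  fold g. rewrite Rminus_0_r. intros Hn.
  replace (RInt g 0 (h * c) - h * c * k x y) with (RInt g 0 (h * c) + - (h * c * k x y)) by ring.
  exact Hn.
Qed.

Lemma dir_deriv (G ku kv : R -> R -> R) u1 u2 v1 v2 al be x y z :
  continuous2 ku -> continuous2 kv ->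
  Rabs u1 <= 1 -> Rabs u2 <= 1 -> Rabs v1 <= 1 -> Rabs v2 <= 1 ->
  (forall x y a, G x y - G (x + a * u1) (y + a * u2)
                 = RInt (fun t => ku (x + t * u1) (y + t * u2)) 0 a) ->
  (forall x y b, G x y - G (x + b * v1) (y + b * v2)
                 = RInt (fun t => kv (x + t * v1) (y + t * v2)) 0 b) ->
  derivable_pt_lim
    (fun t => - G (x + (t - z) * al * u1 + (t - z) * be * v1)
                  (y + (t - z) * al * u2 + (t - z) * be * v2)) z
    (al * ku x y + be * kv x y).
Proof.
  intros Hku Hkv Hu1 Hu2 Hv1 Hv2 HA HB eps Heps.
  pose proof (Rabs_pos al) as Hal. pose proof (Rabs_pos be) as Hbe.
  set (A := Rabs al + Rabs be + 1).
  assert (HA0 : 0 < A) by (unfold A; lra).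
  set (e' := eps / (2 * A)).
  assert (He' : 0 < e') by (unfold e'; apply Rdiv_lt_0_compat; lra).
  destruct (seg_avg ku x y al u1 u2 Hku Hu1 Hu2 e' He') as [d1 [Hd1 H1]].
  destruct (seg_avg kv x y be v1 v2 Hkv Hv1 Hv2 e' He') as [d2 [Hd2 H2]].
  assert (Hd2' : 0 < d2 / (1 + Rabs al)) by (apply Rdiv_lt_0_compat; lra).
  exists (mkposreal (Rmin d1 (d2 / (1 + Rabs al))) (Rmin_pos _ _ Hd1 Hd2')).
  intros h Hh0 Hh. simpl in Hh.
  assert (Hh1 : Rabs h < d1) by (eapply Rlt_le_trans; [exact Hh | apply Rmin_l]).
  assert (Hh2 : Rabs h < d2 / (1 + Rabs al)) by (eapply Rlt_le_trans; [exact Hh | apply Rmin_r]).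
  assert (Hq : d2 / (1 + Rabs al) * (1 + Rabs al) = d2) by (field; lra).
  pose proof (Rabs_pos h) as Hhp.
  assert (Hhal : Rabs h * Rabs al < d2) by nra.
  assert (Hhd2 : Rabs h < d2) by nra.
  replace (z + h - z) with h by ring. replace (z - z) with 0 by ring.
  rewrite !Rmult_0_l, !Rplus_0_r.
  pose proof (HB (x + h * al * u1) (y + h * al * u2) (h * be)) as E1.
  pose proof (HA x y (h * al)) as E2.
  set (Iv := RInt (fun t => kv (x + h * al * u1 + t * v1) (y + h * al * u2 + t * v2)) 0 (h * be)) in *.
  set (Iu := RInt (fun t => ku (x + t * u1) (y + t * u2)) 0 (h * al)) in *.
  assert (B1 : Rabs (Iu - h * al * ku x y) <= Rabs (h * al) * e').
  { apply H1; auto. replace (x - x) with 0 by ring. rewrite Rabs_R0; lra.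
    replace (y - y) with 0 by ring. rewrite Rabs_R0; lra. }
  assert (B2 : Rabs (Iv - h * be * kv x y) <= Rabs (h * be) * e').
  { apply H2; auto.
    - replace (x + h * al * u1 - x) with (h * al * u1) by ring.
      rewrite !Rabs_mult. pose proof (Rabs_pos u1). pose proof (Rabs_pos al). assert (Rabs h * Rabs al * Rabs u1 <= Rabs h * Rabs al * 1) by (apply Rmult_le_compat_l; nra). lra.
    - replace (y + h * al * u2 - y) with (h * al * u2) by ring.
      rewrite !Rabs_mult. pose proof (Rabs_pos u2). pose proof (Rabs_pos al). assert (Rabs h * Rabs al * Rabs u2 <= Rabs h * Rabs al * 1) by (apply Rmult_le_compat_l; nra). lra. }
  replace ((- G (x + h * al * u1 + h * be * v1) (y + h * al * u2 + h * be * v2) - - G x y) / h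
           - (al * ku x y + be * kv x y))
    with (((Iu - h * al * ku x y) + (Iv - h * be * kv x y)) / h).
  2:{ field_simplify_eq; [|exact Hh0]. lra. }
  unfold Rdiv. rewrite Rabs_mult, Rabs_inv.
  assert (Hhpos : 0 < Rabs h) by (apply Rabs_pos_lt; exact Hh0).
  pose proof (Rabs_triang (Iu - h * al * ku x y) (Iv - h * be * kv x y)) as Tr.
  rewrite !Rabs_mult in B1, B2.
  assert (Hsum : Rabs (Iu - h * al * ku x y + (Iv - h * be * kv x y))
                 <= Rabs h * ((Rabs al + Rabs be) * e')) by nra.
  apply Rle_lt_trans with (Rabs h * ((Rabs al + Rabs be) * e') * / Rabs h).
  { apply Rmult_le_compat_r. left; apply Rinv_0_lt_compat; lra. exact Hsum. }
  replace (Rabs h * ((Rabs al + Rabs be) * e') * / Rabs h) with ((Rabs al + Rabs be) * e')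
    by (field; lra).
  unfold e'. replace ((Rabs al + Rabs be) * (eps / (2 * A))) with (eps * ((Rabs al + Rabs be) / (2 * A)))
    by (field; lra).
  assert ((Rabs al + Rabs be) / (2 * A) < 1).
  { apply (Rmult_lt_reg_r (2 * A)). lra. unfold Rdiv. rewrite Rmult_assoc, Rinv_l by lra.
    unfold A. lra. }
  nra.
Qed.

Lemma chain (V f1 f2 : R -> R -> R) x y u1 u2 t :
  (forall a b, is_derive (fun s => V s b) a (f1 a b)) ->
  (forall a b, is_derive (fun s => V a s) b (f2 a b)) ->
  continuous2 f1 ->
  is_derive (fun s => V (x + s * u1) (y + s * u2)) t
    (f1 (x + t * u1) (y + t * u2) * u1 + f2 (x + t * u1) (y + t * u2) * u2).
Proof.
  intros H1 H2 Hc.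
  assert (D1 : is_derive (fun s => x + s * u1) t u1) by (auto_derive; auto; ring).
  assert (D2 : is_derive (fun s => y + s * u2) t u2) by (auto_derive; auto; ring).
  pose proof (is_derive_filterdiff V (x + t * u1) (y + t * u2) f1
                (f2 (x + t * u1) (y + t * u2))
                (filter_forall _ (fun p => H1 (fst p) (snd p)))
                (H2 _ _) (Hc _ _)) as FD.
  pose proof (filterdiff_comp'_2 (fun s => x + s * u1) (fun s => y + s * u2) V t
                (fun h => scal h u1) (fun h => scal h u2)
                (fun a b => plus (scal a (f1 (x + t * u1) (y + t * u2)))
                                 (scal b (f2 (x + t * u1) (y + t * u2)))) D1 D2 FD) as FC.
  unfold is_derive. eapply filterdiff_ext_lin. exact FC.
  intros h. simpl. unfold scal; simpl. unfold mult, plus; simpl. ring.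
Qed.

Lemma const_line (F f : R -> R) a b :
  (forall t, is_derive F t (f t)) -> (forall t, f t = 0) -> F a = F b.
Proof.
  intros HF Hf.
  assert (H : is_RInt (fun _ => 0) a b (minus (F b) (F a))).
  { apply (@is_RInt_derive R_CompleteNormedModule F).
    - intros t _. rewrite <- (Hf t). apply HF.
    - intros; apply continuous_const. }
  apply (@is_RInt_unique R_CompleteNormedModule) in H.
  rewrite RInt_const in H.
  revert H. unfold minus, plus, opp, scal; simpl. unfold mult; simpl. intros H.
  lra.
Qed.

Lemma unit_bound u1 u2 : u1 ^ 2 + u2 ^ 2 = 1 -> Rabs u1 <= 1 /\ Rabs u2 <= 1.
Proof.
  intros Hu. pose proof (pow2_abs u1). pose proof (pow2_abs u2).
  pose proof (Rabs_pos u1). pose proof (Rabs_pos u2).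
  pose proof (pow2_ge_0 u1). pose proof (pow2_ge_0 u2). split; nra.
Qed.

Lemma beam_grad (V f1 f2 : R -> R -> R) r u1 u2 x y :
  (forall a b, is_derive (fun s => V s b) a (f1 a b)) ->
  (forall a b, is_derive (fun s => V a s) b (f2 a b)) ->
  continuous2 f1 -> continuous2 f2 -> 0 <= r ->
  (forall a b, r ^ 2 <= a ^ 2 + b ^ 2 -> f1 a b = 0 /\ f2 a b = 0) ->
  u1 ^ 2 + u2 ^ 2 = 1 ->
  beam (fun a b => f1 a b * u1 + f2 a b * u2) u1 u2 x y = V (r + 1) (r + 1) - V x y.
Proof.
  intros H1 H2 C1 C2 Hr Hs Hu.
  set (M := r + 1).
  assert (hconst : forall y0, M <= Rabs y0 -> forall a b, V a y0 = V b y0).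
  { intros y0 Hy0 a b. apply (const_line (fun s => V s y0) (fun s => f1 s y0)).
    - intros; apply H1.
    - intros t. apply Hs. pose proof (pow2_abs y0). pose proof (pow2_ge_0 t).
      unfold M in Hy0. nra. }
  assert (vconst : forall x0, M <= Rabs x0 -> forall a b, V x0 a = V x0 b).
  { intros x0 Hx0 a b. apply (const_line (fun s => V x0 s) (fun s => f2 x0 s)).
    - intros; apply H2.
    - intros t. apply Hs. pose proof (pow2_abs x0). pose proof (pow2_ge_0 t).
      unfold M in Hx0. nra. }
  assert (HM : M <= Rabs M) by (unfold M; rewrite Rabs_right; lra).
  assert (corner : forall a b, M <= Rabs a \/ M <= Rabs b -> V a b = V M M).
  { intros a b [Ha | Hb].
    - rewrite (vconst a Ha b M). apply hconst. exact HM.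
    - rewrite (hconst b Hb a M). apply vconst. exact HM. }
  set (k := fun a b => f1 a b * u1 + f2 a b * u2).
  assert (Ck : continuous2 k) by (apply cont2_comb; auto).
  assert (Sk : forall a b, r ^ 2 <= a ^ 2 + b ^ 2 -> k a b = 0).
  { intros a b Hab. unfold k. destruct (Hs a b Hab) as [-> ->]. ring. }
  pose proof (Rabs_pos x). pose proof (Rabs_pos y).
  set (T := 2 * (Rabs x + Rabs y) + r + 2 * M).
  rewrite (beam_val k r u1 u2 Ck Hr Hu Sk x y T) by (unfold T, M; lra).
  assert (HI : is_RInt (fun t => k (x + t * u1) (y + t * u2)) 0 T
      (minus (V (x + T * u1) (y + T * u2)) (V (x + 0 * u1) (y + 0 * u2)))).
  { apply (@is_RInt_derive R_CompleteNormedModule (fun s => V (x + s * u1) (y + s * u2))).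
    - intros t _. apply chain; auto.
    - intros t _. apply cont_line; auto. }
  apply (@is_RInt_unique R_CompleteNormedModule) in HI. rewrite HI.
  rewrite !Rmult_0_l, !Rplus_0_r.
  rewrite (corner (x + T * u1) (y + T * u2)).
  - reflexivity.
  - assert (HT : 0 <= T) by (unfold T, M; lra).
    destruct (Rle_dec (1/2) (u1 ^ 2)) as [Hu1 | Hu1].
    + left. assert (Ha : 1/2 <= Rabs u1).
      { pose proof (pow2_abs u1). pose proof (Rabs_pos u1). nra. }
      pose proof (Rabs_triang_inv (T * u1) (- x)). rewrite Rabs_mult, Rabs_Ropp in H3.
      rewrite (Rabs_right T) in H3 by lra.
      replace (T * u1 - - x) with (x + T * u1) in H3 by ring.
      assert (T * Rabs u1 >= T * (1/2)) by nra. unfold T in *. lra.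
    + right. assert (Ha : 1/2 <= Rabs u2).
      { pose proof (pow2_abs u2). pose proof (Rabs_pos u2). nra. }
      pose proof (Rabs_triang_inv (T * u2) (- y)). rewrite Rabs_mult, Rabs_Ropp in H3.
      rewrite (Rabs_right T) in H3 by lra.
      replace (T * u2 - - y) with (y + T * u2) in H3 by ring.
      assert (T * Rabs u2 >= T * (1/2)) by nra. unfold T in *. lra.
Qed.

Theorem theorem1 (u1 u2 v1 v2 r1 : R) (f1 f2 : R -> R -> R) :
  u1 ^ 2 + u2 ^ 2 = 1 ->
  v1 ^ 2 + v2 ^ 2 = 1 ->
  u1 * v2 - u2 * v1 <> 0 ->
  0 < r1 ->
  C2_2d f1 -> C2_2d f2 ->
  supp_in_disc f1 r1 -> supp_in_disc f2 r1 ->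
  ((forall x y : R, LVT f1 f2 u1 u2 v1 v2 x y = 0) <->
   exists V : R -> R -> R, forall x y : R,
     is_derive (fun t => V t y) x (f1 x y) /\
     is_derive (fun t => V x t) y (f2 x y)).
Proof.
  intros Hu Hv Hd Hr1 C1 C2 S1 S2.
  destruct C1 as [[Cf1 _] _]. destruct C2 as [[Cf2 _] _].
  destruct S1 as [ra [Hra Hsa]]. destruct S2 as [rb [Hrb Hsb]].
  set (r := Rmax ra rb).
  assert (Hr : 0 <= r) by (unfold r; eapply Rle_trans; [|apply Rmax_l]; lra).
  assert (Hs : forall a b, r ^ 2 <= a ^ 2 + b ^ 2 -> f1 a b = 0 /\ f2 a b = 0).
  { intros a b Hab. pose proof (Rmax_l ra rb). pose proof (Rmax_r ra rb). fold r in H, H0.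
    split; [apply Hsa | apply Hsb]; nra. }
  destruct (unit_bound u1 u2 Hu) as [Hu1 Hu2].
  destruct (unit_bound v1 v2 Hv) as [Hv1 Hv2].
  set (kU := fun a b => f1 a b * u1 + f2 a b * u2).
  set (kV := fun a b => f1 a b * v1 + f2 a b * v2).
  assert (CU : continuous2 kU) by (apply cont2_comb; auto).
  assert (CV : continuous2 kV) by (apply cont2_comb; auto).
  assert (SU : forall a b, r ^ 2 <= a ^ 2 + b ^ 2 -> kU a b = 0).
  { intros a b Hab. unfold kU. destruct (Hs a b Hab) as [-> ->]. ring. }
  assert (SV : forall a b, r ^ 2 <= a ^ 2 + b ^ 2 -> kV a b = 0).
  { intros a b Hab. unfold kV. destruct (Hs a b Hab) as [-> ->]. ring. }
  unfold LVT. fold kU kV.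
  split.
  - intros H.
    set (G := fun x y => beam kU u1 u2 x y).
    assert (HGV : forall x y, beam kV v1 v2 x y = G x y).
    { intros x y. specialize (H x y). unfold G. lra. }
    assert (HA : forall x y a, G x y - G (x + a * u1) (y + a * u2)
                 = RInt (fun t => kU (x + t * u1) (y + t * u2)) 0 a).
    { intros. unfold G. apply beam_shift with r; auto. }
    assert (HB : forall x y b, G x y - G (x + b * v1) (y + b * v2)
                 = RInt (fun t => kV (x + t * v1) (y + t * v2)) 0 b).
    { intros. rewrite <- !HGV. apply beam_shift with r; auto. }
    set (d := u1 * v2 - u2 * v1) in *.
    exists (fun x y => - G x y). intros x y. split.
    + pose proof (dir_deriv G kU kV u1 u2 v1 v2 (v2 / d) (- u2 / d) x y x
                    CU CV Hu1 Hu2 Hv1 Hv2 HA HB) as D.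
      apply is_derive_Reals in D.
      replace (f1 x y) with (v2 / d * kU x y + - u2 / d * kV x y)
        by (unfold kU, kV, d in *; field; exact Hd).
      eapply is_derive_ext; [|exact D].
      intros t. simpl. apply f_equal, f_equal2; unfold d in *; field; exact Hd.
    + pose proof (dir_deriv G kU kV u1 u2 v1 v2 (- v1 / d) (u1 / d) x y y
                    CU CV Hu1 Hu2 Hv1 Hv2 HA HB) as D.
      apply is_derive_Reals in D.
      replace (f2 x y) with (- v1 / d * kU x y + u1 / d * kV x y)
        by (unfold kU, kV, d in *; field; exact Hd).
      eapply is_derive_ext; [|exact D].
      intros t. simpl. apply f_equal, f_equal2; unfold d in *; field; exact Hd.
  - intros [V HV] x y.
    assert (H1 : forall a b, is_derive (fun s => V s b) a (f1 a b)) by (intros; apply HV).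
    assert (H2 : forall a b, is_derive (fun s => V a s) b (f2 a b)) by (intros; apply HV).
    unfold kU, kV.
    rewrite (beam_grad V f1 f2 r u1 u2 x y H1 H2 Cf1 Cf2 Hr Hs Hu).
    rewrite (beam_grad V f1 f2 r v1 v2 x y H1 H2 Cf1 Cf2 Hr Hs Hv).
    ring.
Qed.
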